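(* Let $Q_k^A,Q_k^B$ be the SDQ iterates, $Q_k^{\mathrm{err}}=Q_k^A-Q_k^B$, and $w_k^A,w_k^B$ the associated noise vectors (see context). Define \[ Q_{k+1}^{\mathrm{err}_L}=(I+\alpha\gamma DP\Pi_{Q_k^B}-\alpha D)Q_k^{\mathrm{err}_L}+\alpha w_k^A-\alpha w_k^B, \] with initial vector $Q_0^{\mathrm{err}_L}\in\mathbb{R}^{|\mathcal{S}||\mathcal{A}|}$. If $Q_0^{\mathrm{err}_L}\le Q_0^{\mathrm{err}}$ element-wise, then $Q_k^{\mathrm{err}_L}\le Q_k^{\mathrm{err}}$ element-wise for all $k\ge0$.
   Context: Finite MDP with states $\mathcal{S}=\{1,\dots,|\mathcal{S}|\}$, actions $\mathcal{A}=\{1,\dots,|\mathcal{A}|\}$, transitions $P(s'|s,a)$, bounded deterministic reward $r(s,a,s')$, discount $\gamma\in(0,1)$. Sampling distribution $d(s,a)>0$ on $\mathcal{S}\times\mathcal{A}$; at iteration $k$, $(s_k,a_k)\sim d$ i.i.d., $s_k'\sim P(\cdot|s_k,a_k)$, $r_{k+1}=r(s_k,a_k,s_k')$. Constant step-size $\alpha\in(0,1)$. SDQ: only entry $(s_k,a_k)$ is updated, $Q_{k+1}^A(s_k,a_k)=Q_k^A(s_k,a_k)+\alpha\{r_{k+1}+\gamma Q_k^A(s_k',\arg\max_aQ_k^B(s_k',a))-Q_k^A(s_k,a_k)\}$ and symmetrically for $B$ with roles of $A,B$ swapped. Vector notation: $Q\in\mathbb{R}^{|\mathcal{S}||\mathcal{A}|}$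 stacks $Q(\cdot,1),\dots,Q(\cdot,|\mathcal{A}|)$, so $Q(s,a)=(e_a\otimes e_s)^TQ$. $D$ is the diagonal matrix with entry $d(s,a)$ at position $(s,a)$. $P\in\mathbb{R}^{|\mathcal{S}||\mathcal{A}|\times|\mathcal{S}|}$ has row $(s,a)$ equal to $P(\cdot|s,a)$. $R(s,a)=\mathbb{E}[r(s,a,s')|s,a]$. For $Q$, $\pi_Q(s)=\arg\max_aQ(s,a)$ (fixed tie-breaking) and $\Pi_Q\in\mathbb{R}^{|\mathcal{S}|\times|\mathcal{S}||\mathcal{A}|}$ has $s$-th row $e_{\pi_Q(s)}^T\otimes e_s^T$. Noise: $w_k^A=(e_{a_k}\otimes e_{s_k})r_{k+1}+\gamma(e_{a_k}\otimes e_{s_k})e_{s_k'}^T\Pi_{Q_k^B}Q_k^A-(e_{a_k}\otimes e_{s_k})(e_{a_k}\otimes e_{s_k})^TQ_k^A-(DR+\gamma DP\Pi_{Q_k^B}Q_k^A-DQ_k^A)$, and $w_k^B$ is the same with $A$ and $B$ swapped. *)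

(* Defs.v *)
(* States/actions are arbitrary finite types; Q-functions are
   functions S -> A -> R (the entry (s,a) of the stacked vector Q). *)
From mathcomp Require Import all_boot all_order all_algebra.
Set Implicit Arguments. Unset Strict Implicit. Unset Printing Implicit Defensive.
Import Order.TTheory GRing.Theory Num.Theory.
Local Open Scope ring_scope.

Section SDQ.
Variables (R : realFieldType) (S A : finType).
Variables (P : S -> A -> S -> R)      (* P s a s' = P(s'|s,a) *)
          (r : S -> A -> S -> R)
          (d : S -> A -> R)
          (gamma alpha : R)
          (pi : (S -> A -> R) -> S -> A)  (* greedy policy pi_Q, fixed tie-breaking *)
          (s_ : nat -> S) (a_ : nat -> A) (s'_ : nat -> S).

Definition Qfun := S -> A -> R.

(* indicator of (e_{a_k} (x) e_{s_k}) at entry (s,a) *)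
Definition ind (k : nat) (s : S) (a : A) : R :=
  if (s == s_ k) && (a == a_ k) then 1 else 0.

(* r_{k+1} *)
Definition rew (k : nat) : R := r (s_ k) (a_ k) (s'_ k).

Definition Rexp (s : S) (a : A) : R := \sum_(s' : S) P s a s' * r s a s'.

Definition PPi (QY QX : Qfun) (s : S) (a : A) : R :=
  \sum_(s' : S) P s a s' * QX s' (pi QY s').

Definition sdq_upd (k : nat) (QX QY : Qfun) : Qfun := fun s a =>
  if (s == s_ k) && (a == a_ k)
  then QX s a + alpha * (rew k + gamma * QX (s'_ k) (pi QY (s'_ k)) - QX s a)
  else QX s a.

Fixpoint sdq (QA0 QB0 : Qfun) (k : nat) : Qfun * Qfun :=
  match k with
  | 0 => (QA0, QB0)
  | k'.+1 => let QA := (sdq QA0 QB0 k').1 in let QB := (sdq QA0 QB0 k').2 in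
             (sdq_upd k' QA QB, sdq_upd k' QB QA)
  end.

(* noise vector w_k for QX (with QY selecting actions):
   w = e r_{k+1} + gamma e e_{s'_k}^T Pi_{QY} QX - e e^T QX
       - (D R + gamma D P Pi_{QY} QX - D QX),  e = e_{a_k} (x) e_{s_k} *)
Definition noise (k : nat) (QX QY : Qfun) : Qfun := fun s a =>
  ind k s a * rew k + gamma * (ind k s a * QX (s'_ k) (pi QY (s'_ k)))
  - ind k s a * QX (s_ k) (a_ k)
  - (d s a * Rexp s a + gamma * (d s a * PPi QY QX s a) - d s a * QX s a).

Definition wA (QA0 QB0 : Qfun) (k : nat) : Qfun :=
  noise k (sdq QA0 QB0 k).1 (sdq QA0 QB0 k).2.
Definition wB (QA0 QB0 : Qfun) (k : nat) : Qfun :=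
  noise k (sdq QA0 QB0 k).2 (sdq QA0 QB0 k).1.

Fixpoint errL (QA0 QB0 E0 : Qfun) (k : nat) : Qfun :=
  match k with
  | 0 => E0
  | k'.+1 => let E := errL QA0 QB0 E0 k' in
             let QB := (sdq QA0 QB0 k').2 in
             fun s a => E s a + alpha * gamma * (d s a * PPi QB E s a)
                        - alpha * (d s a * E s a)
                        + alpha * wA QA0 QB0 k' s a - alpha * wB QA0 QB0 k' s a
  end.

End SDQ.

(* Main.v *)
Require Import Defs.
From mathcomp Require Import all_boot all_order all_algebra.
From mathcomp Require Import ring lra.
Import Order.TTheory GRing.Theory Num.Theory.
Local Open Scope ring_scope.

Section Aux.
Variables (R : realFieldType) (S A : finType).
Variables (P : S -> A -> S -> R) (r : S -> A -> S -> R) (d : S -> A -> R)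
          (gamma alpha : R) (pi : (S -> A -> R) -> S -> A)
          (s_ : nat -> S) (a_ : nat -> A) (s'_ : nat -> S).

Lemma step_le (k : nat) (QA QB L : S -> A -> R) s a :
  (forall s a s', 0 <= P s a s') ->
  0 < d s a -> d s a <= 1 -> 0 < gamma -> 0 < alpha < 1 ->
  (forall (Q : S -> A -> R) s a, Q s a <= Q s (pi Q s)) ->
  (forall s a, L s a <= QA s a - QB s a) ->
  L s a + alpha * gamma * (d s a * PPi P pi QB L s a) - alpha * (d s a * L s a)
  + alpha * noise P r d gamma pi s_ a_ s'_ k QA QB s a
  - alpha * noise P r d gamma pi s_ a_ s'_ k QB QA s a
  <= sdq_upd r gamma alpha pi s_ a_ s'_ k QA QB s a
     - sdq_upd r gamma alpha pi s_ a_ s'_ k QB QA s a.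
Proof.
move=> P0 d0 d1 g0 /andP[a0 a1] Hpi HL.
set X := PPi P pi QB L s a.
set Y := PPi P pi QB QA s a.
set Z := PPi P pi QA QB s a.
have HXYZ : 0 <= Y - Z - X.
  rewrite /X /Y /Z /PPi -!sumrB; apply: sumr_ge0 => s' _.
  rewrite -!mulrBr; apply: mulr_ge0 => //.
  have := HL s' (pi QB s'); have := Hpi QB s' (pi QA s'); lra.
have t1 : 0 <= (1 - alpha * d s a) * (QA s a - QB s a - L s a).
  apply: mulr_ge0; last by have := HL s a; lra.
  have : alpha * d s a <= 1 * 1 by apply: ler_pM => //; lra.
  lra.
have t2 : 0 <= alpha * gamma * d s a * (Y - Z - X).
  by rewrite mulr_ge0 // !mulr_ge0 // ltW.
suff -> : L s a + alpha * gamma * (d s a * X) - alpha * (d s a * L s a)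
  + alpha * noise P r d gamma pi s_ a_ s'_ k QA QB s a
  - alpha * noise P r d gamma pi s_ a_ s'_ k QB QA s a
  = sdq_upd r gamma alpha pi s_ a_ s'_ k QA QB s a
     - sdq_upd r gamma alpha pi s_ a_ s'_ k QB QA s a
    - (1 - alpha * d s a) * (QA s a - QB s a - L s a)
    - alpha * gamma * d s a * (Y - Z - X) by lra.
rewrite /noise /sdq_upd /ind -/Y -/Z.
case: ifP => [/andP[/eqP -> /eqP ->]|_]; ring.
Qed.
End Aux.

Theorem proposition5 (R : realFieldType) (S A : finType)
    (P : S -> A -> S -> R) (r : S -> A -> S -> R) (d : S -> A -> R)
    (gamma alpha : R) (pi : (S -> A -> R) -> S -> A)
    (s_ : nat -> S) (a_ : nat -> A) (s'_ : nat -> S)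
    (QA0 QB0 E0 : S -> A -> R) :
  (forall s a s', 0 <= P s a s') ->
  (forall s a, \sum_(s' : S) P s a s' = 1) ->
  (forall s a, 0 < d s a) ->
  \sum_(s : S) \sum_(a : A) d s a = 1 ->
  0 < gamma < 1 ->
  0 < alpha < 1 ->
  (forall (Q : S -> A -> R) s a, Q s a <= Q s (pi Q s)) ->
  (forall s a, E0 s a <= QA0 s a - QB0 s a) ->
  forall (k : nat) (s : S) (a : A),
    errL P r d gamma alpha pi s_ a_ s'_ QA0 QB0 E0 k s a
    <= (sdq r gamma alpha pi s_ a_ s'_ QA0 QB0 k).1 s a
       - (sdq r gamma alpha pi s_ a_ s'_ QA0 QB0 k).2 s a.
Proof.
move=> P0 _ d0 dsum /andP[g0 g1] al Hpi H0 k.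
have d1 : forall s a, d s a <= 1.
  move=> s a; rewrite -dsum.
  rewrite (bigD1 s) //= (bigD1 a) //=.
  rewrite -addrA lerDl addr_ge0 //.
    by apply: sumr_ge0 => i _; exact: ltW.
  by apply: sumr_ge0 => i _; apply: sumr_ge0 => j _; exact: ltW.
elim: k => [|k IH] s a; first exact: H0.
rewrite /=.
by apply: step_le.
Qed.
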